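(* The family of partial orders $\mathfrak{P}=\{\tilde{\mathcal{P}}_i:i\in\mathbb{N}\}$ is both $E_0$-learnable and $E_{range}$-learnable, but it is not $\mathbf{nUs}$-learnable.
   Context: Partial orders are structures in the language $\{\leq\}$. For $k>0$, $\mathcal{P}_k$ is the partial order on $\{0,\dots,2k+1\}$ that is the reflexive transitive closure of the relations $2i\leq 2i+2$ for $i<k$ and $2i\leq 2i+1$ for $i\leq k$. $\mathcal{P}_0$ is the partial order on $\mathbb{N}$ that is the reflexive transitive closure of $2i\leq 2i+2$ for all $i$ and $2j\leq 2j-1$ for all $j>0$. For a partial order $L$, $\tilde{L}$ is $L$ together with infinitely many new elements that are pairwise incomparable and incomparable to the elements of $L$ (presented with domain $\mathbb{N}$). All structures are countable, have domain $\mathbb{N}$, and are identified with their atomic diagrams (elements of $2^{\mathbb{N}}$). A family of structures $\mathfrak{K}$ is a countable set of pairwise nonisomorphic such structures; $\mathcal{S}\restriction_s$ is the finite substructure on $\{0,\dots,s\}$; $\mathrm{LD}(\mathfrak{K})\subseteq2^{\mathbb{N}}$ is the set of structures with domain $\mathbb{N}$ isomorphic to a member of $\mathfrak{K}$ (subspace topology). For an equivalence relation $E$ on a space $X$, $\mathfrak{K}$ is $E$-learnable if there is a continuous $\Gamma:\mathrm{LD}(\mathfrak{K})\to X$ with $\mathcal{S}\cong\mathcal{S}'\iff\Gamma(\mathcal{S})E\Gamma(\mathcal{S}')$ on $\mathrm{LD}(\mathfrak{K})$. On $\mathbb{N}^{\mathbb{N}}$: $p\,E_0\,q\iff\exists m\forall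 n\ge m\ p(n)=q(n)$; $p\,E_{range}\,q\iff\{p(m):m\}=\{q(m):m\}$. A learner is an arbitrary function from $\{\mathcal{S}\restriction_s:\mathcal{S}\in\mathrm{LD}(\mathfrak{K})\}$ to $\{\ulcorner\mathcal{A}\urcorner:\mathcal{A}\in\mathfrak{K}\}\cup\{?\}$. $\mathfrak{K}$ is $\mathbf{nUs}$-learnable if some learner $\mathbf{M}$ satisfies: for every $\mathcal{S}\in\mathrm{LD}(\mathfrak{K})$ with $\mathcal{S}\cong\mathcal{A}\in\mathfrak{K}$, $\mathbf{M}(\mathcal{S}\restriction_n)$ is eventually constantly $\ulcorner\mathcal{A}\urcorner$, and once $\mathbf{M}$ first outputs $\ulcorner\mathcal{A}\urcorner$ on $\mathcal{S}$ it outputs $\ulcorner\mathcal{A}\urcorner$ at all later stages. *)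

(* Defs.v *)
From Stdlib Require Import Arith PeanoNat Bool Relations ClassicalEpsilon.
Local Open Scope bool_scope.

(** * Structures in the language {<=} with domain N, identified with their
    atomic diagrams: a binary relation on nat with boolean values
    (the equality atoms of the diagram are fixed and carry no information). *)
Definition structure := nat -> nat -> bool.

Definition pbool (P : Prop) : bool :=
  if excluded_middle_informative P then true else false.

Definition iso (S S' : structure) : Prop :=
  exists (f g : nat -> nat),
    (forall x, g (f x) = x) /\ (forall y, f (g y) = y) /\
    (forall x y, S x y = S' (f x) (f y)).

Definition agree_upto (s : nat) (S S' : structure) : Prop :=
  forall x y, x <= s -> y <= s -> S x y = S' x y.

Definition Pgen (k : nat) (x y : nat) : Prop :=
  if k =? 0 then
    (exists i, x = 2 * i /\ y = 2 * i + 2) \/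
    (exists j, 0 < j /\ x = 2 * j /\ y = 2 * j - 1)
  else
    (exists i, i < k /\ x = 2 * i /\ y = 2 * i + 2) \/
    (exists i, i <= k /\ x = 2 * i /\ y = 2 * i + 1).

Definition Pdom (k : nat) (x : nat) : bool :=
  if k =? 0 then true else x <=? 2 * k + 1.

Definition Ple (k : nat) (x y : nat) : bool :=
  pbool (clos_refl_trans nat (Pgen k) x y).

(** * Tilde: L together with infinitely many new pairwise incomparable elements,
    incomparable to L, presented with domain N:
    element 2n is the element n of L (when n is in the domain of L),
    all other elements are new. *)
Definition tilde (dom : nat -> bool) (le : nat -> nat -> bool) : structure :=
  fun x y =>
    (x =? y) ||
    (Nat.even x && Nat.even y && dom (Nat.div2 x) && dom (Nat.div2 y)
       && le (Nat.div2 x) (Nat.div2 y)).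

Definition Pfam (i : nat) : structure := tilde (Pdom i) (Ple i).

Definition LD (fam : nat -> structure) (S : structure) : Prop :=
  exists i, iso S (fam i).

(** Continuity of Gamma : LD(K) -> N^N, where LD(K) carries the subspace topology
    of Cantor space (basic opens fix finitely many atoms, equivalently fix the
    diagram on some {0..m}) and N^N the product (Baire) topology. *)
Definition continuous_on_LD (fam : nat -> structure)
    (Gamma : structure -> (nat -> nat)) : Prop :=
  forall S, LD fam S -> forall n, exists m, forall S', LD fam S' ->
    agree_upto m S S' -> forall j, j <= n -> Gamma S' j = Gamma S j.

Definition E_learnable (E : (nat -> nat) -> (nat -> nat) -> Prop)
    (fam : nat -> structure) : Prop :=
  exists Gamma : structure -> (nat -> nat),
    continuous_on_LD fam Gamma /\
    forall S S', LD fam S -> LD fam S' -> (iso S S' <-> E (Gamma S) (Gamma S')).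

Definition E0 (p q : nat -> nat) : Prop :=
  exists m, forall n, m <= n -> p n = q n.

Definition Erange (p q : nat -> nat) : Prop :=
  forall a, (exists m, p m = a) <-> (exists m, q m = a).

(** A learner: M s S is the output on the finite substructure S|_s (restriction
    of S to {0,...,s}); it may only depend on that substructure.
    Output Some i = the code of fam i, None = "?". *)
Definition learner := nat -> structure -> option nat.

Definition is_learner (M : learner) : Prop :=
  forall s S S', agree_upto s S S' -> M s S = M s S'.

Definition nUs_learnable (fam : nat -> structure) : Prop :=
  exists M : learner, is_learner M /\
    forall S i, LD fam S -> iso S (fam i) ->
      (exists n0, forall n, n0 <= n -> M n S = Some i) /\
      (forall n, M n S = Some i -> forall m, n <= m -> M m S = Some i).

(* Main.v *)
Require Import Defs.
From Stdlib Require Import Arith Lia List Bool Relations ClassicalEpsilon FinFun Permutation.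
Import ListNotations.

Ltac elim_mod1 x c :=
  let Hd := fresh "Hd" in let Hb := fresh "Hb" in
  pose proof (Nat.div_mod_eq x c) as Hd; pose proof (Nat.mod_upper_bound x c ltac:(discriminate)) as Hb;
  let r := fresh "r" in let q := fresh "q" in
  set (r := x mod c) in *; set (q := x / c) in *; clearbody r q.
Ltac elim_mod := repeat match goal with
 | H: context [?x mod ?c] |- _ => elim_mod1 x c
 | |- context [?x mod ?c] => elim_mod1 x c
 | H: context [?x / ?c] |- _ => elim_mod1 x c
 | |- context [?x / ?c] => elim_mod1 x c end.
Ltac mlia := elim_mod; lia.

Lemma pbool_true (P : Prop) : pbool P = true <-> P.
Proof. unfold pbool. destruct (excluded_middle_informative P); split; intuition discriminate. Qed.

Lemma pbool_ext (P Q : Prop) : (P <-> Q) -> pbool P = pbool Q.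
Proof. intro H. unfold pbool. destruct (excluded_middle_informative P), (excluded_middle_informative Q); tauto. Qed.

Lemma spine_path k j d : (forall i, j <= i -> i < j + d -> Pgen k (2*i) (2*i+2)) ->
  clos_refl_trans nat (Pgen k) (2*j) (2*j+2*d).
Proof.
  induction d; intro H.
  - replace (2*j+2*0) with (2*j) by lia. apply rt_refl.
  - eapply rt_trans. apply IHd. intros; apply H; lia.
    replace (2*j+2*S d) with (2*(j+d)+2) by lia. replace (2*j+2*d) with (2*(j+d)) by lia.
    apply rt_step. apply H; lia.
Qed.

Lemma rt0 a b : clos_refl_trans nat (Pgen 0) a b <->
  a = b \/ (a mod 2 = 0 /\ ((b mod 2 = 0 /\ a <= b) \/ (b mod 2 = 1 /\ a <= b + 1))).
Proof.
  split.
  - intro H. induction H.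
    + unfold Pgen in H; simpl in H. destruct H as [[i [-> ->]]|[j [Hj [-> ->]]]]; right; mlia.
    + left; reflexivity.
    + mlia.
  - intros [->|[Ha Hb]]. apply rt_refl.
    assert (Ea : a = 2*(a/2)) by (pose proof (Nat.div_mod_eq a 2); lia).
    assert (Hsp : forall i, Pgen 0 (2*i) (2*i+2)) by (intro i; left; exists i; auto).
    destruct Hb as [[Hb Hab]|[Hb Hab]].
    + assert (Eb : b = 2*(a/2) + 2*((b - a)/2)) by (pose proof (Nat.div_mod_eq (b-a) 2); mlia).
      rewrite Ea, Eb. apply spine_path. auto.
    + assert (Eb : b + 1 = 2*(a/2) + 2*((b + 1 - a)/2)) by (pose proof (Nat.div_mod_eq (b+1-a) 2); mlia).
      apply rt_trans with (y := b+1). rewrite Eb. rewrite Ea at 1. apply (spine_path 0 (a/2) ((b+1-a)/2)); auto.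
      apply rt_step. right. exists ((b+1)/2). mlia.
Qed.

Lemma rtk k a b : 0 < k -> (clos_refl_trans nat (Pgen k) a b <->
  a = b \/ (a mod 2 = 0 /\ a <= b /\ b <= 2*k+1)).
Proof.
  intro Hk. assert (Ek : (k =? 0) = false) by (apply Nat.eqb_neq; lia).
  split.
  - intro H. induction H.
    + unfold Pgen in H; rewrite Ek in H. destruct H as [[i [Hi [-> ->]]]|[i [Hi [-> ->]]]]; right; mlia.
    + left; reflexivity.
    + mlia.
  - intros [->|[Ha [Hab Hb]]]. apply rt_refl.
    assert (Ea : a = 2*(a/2)) by (pose proof (Nat.div_mod_eq a 2); lia).
    assert (Hsp : forall i, a/2 <= i -> i < a/2 + (b-a)/2 -> Pgen k (2*i) (2*i+2)).
    { intros i H1 H2. unfold Pgen; rewrite Ek. left. exists i. mlia. }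
    destruct (Nat.eq_dec (b mod 2) 0) as [Hb0|Hb0].
    + assert (Eb : b = 2*(a/2) + 2*((b - a)/2)) by (pose proof (Nat.div_mod_eq (b-a) 2); mlia).
      rewrite Ea, Eb. apply spine_path. auto.
    + assert (Eb : b = 2*(a/2) + 2*((b - a)/2) + 1) by (pose proof (Nat.div_mod_eq (b-a) 2); mlia).
      apply rt_trans with (y := b-1). replace (b-1) with (2*(a/2) + 2*((b - a)/2)) by lia.
      rewrite Ea at 1. apply (spine_path k (a/2) ((b-a)/2)); auto.
      rewrite Eb at 2. replace (b-1) with (2*(a/2 + (b-a)/2)) by lia. apply rt_step. unfold Pgen; rewrite Ek. right. exists (a/2 + (b-a)/2). mlia.
Qed.

Lemma even_div2 u : (Nat.even u = true /\ u = 2 * Nat.div2 u) \/ (Nat.even u = false /\ u = 2 * Nat.div2 u + 1).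
Proof.
  pose proof (Nat.div2_odd u) as H. unfold Nat.odd in H.
  destruct (Nat.even u); simpl in H; [left|right]; split; auto; lia.
Qed.

Lemma Pdom0 x : Pdom 0 x = true. Proof. reflexivity. Qed.
Lemma Pdomk k x : 0 < k -> Pdom k x = (x <=? 2*k+1).
Proof. intro. unfold Pdom. replace (k =? 0) with false by (symmetry; apply Nat.eqb_neq; lia). reflexivity. Qed.

Lemma Pfam0_char u v : Pfam 0 u v = true <->
  u = v \/ (u mod 4 = 0 /\ ((v mod 4 = 0 /\ u <= v) \/ (v mod 4 = 2 /\ u <= v + 2))).
Proof.
  unfold Pfam, tilde. rewrite !Pdom0. unfold Ple.
  rewrite orb_true_iff, Nat.eqb_eq.
  destruct (even_div2 u) as [[E1 H1]|[E1 H1]]; destruct (even_div2 v) as [[E2 H2]|[E2 H2]];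
    rewrite E1, E2; cbn [andb]; try rewrite pbool_true, rt0;
    set (a := Nat.div2 u) in *; set (b := Nat.div2 v) in *; clearbody a b; subst;
    (split; [intros [H|H]; [left; auto| try discriminate; mlia] | intro H; first [mlia | left; mlia]]).
Qed.

Lemma Pfamk_char k u v : 0 < k -> (Pfam k u v = true <->
  u = v \/ (u mod 4 = 0 /\ v mod 2 = 0 /\ u <= v /\ v <= 4*k+2)).
Proof.
  intro Hk.
  unfold Pfam, tilde. rewrite !(Pdomk k _ Hk). unfold Ple.
  rewrite orb_true_iff, Nat.eqb_eq.
  destruct (even_div2 u) as [[E1 H1]|[E1 H1]]; destruct (even_div2 v) as [[E2 H2]|[E2 H2]];
    rewrite E1, E2; cbn [andb]; try rewrite !andb_true_iff, !Nat.leb_le, pbool_true, (rtk k _ _ Hk);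
    set (a := Nat.div2 u) in *; set (b := Nat.div2 v) in *; clearbody a b; subst;
    (split; [intros [H|H]; [left; auto| try discriminate; mlia] | intro H; first [mlia | left; mlia]]).
Qed.

Lemma iso_refl A : iso A A.
Proof. exists (fun x => x), (fun x => x). auto. Qed.
Lemma iso_sym A B : iso A B -> iso B A.
Proof. intros (f & g & H1 & H2 & H3). exists g, f. repeat split; auto.
  intros x y. rewrite H3, !H2. reflexivity. Qed.
Lemma iso_trans A B C : iso A B -> iso B C -> iso A C.
Proof. intros (f & g & H1 & H2 & H3) (f' & g' & H1' & H2' & H3').
  exists (fun x => f' (f x)), (fun y => g (g' y)). repeat split.
  - intro x. rewrite H1', H1. auto.
  - intro y. rewrite H2, H2'. auto.
  - intros x y. rewrite H3, H3'. auto. Qed.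

Lemma bound_list (g : nat -> nat) (L : list nat) : exists N, forall c, In c L -> g c <= N.
Proof.
  induction L as [|a L [N HN]]. exists 0; intros c [].
  exists (max (g a) N). intros c [->|H]. lia. specialize (HN c H). lia.
Qed.

Lemma bound_upto (f : nat -> nat) n : exists B, forall x, x <= n -> f x <= B.
Proof. destruct (bound_list f (seq 0 (n+1))) as [B HB]. exists B. intros x Hx.
  apply HB. apply in_seq. lia. Qed.

Lemma NoDup_map_inj (g f : nat -> nat) L : (forall y, f (g y) = y) -> NoDup L -> NoDup (map g L).
Proof. intros H HL. apply FinFun.Injective_map_NoDup; auto.
  intros x y E. rewrite <- (H x), <- (H y), E. auto. Qed.

Lemma count_perm (p : nat -> bool) n (f g : nat -> nat) L :
  (forall x, g (f x) = x) -> (forall y, f (g y) = y) -> NoDup L ->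
  (forall c, In c L -> g c <= n) -> (forall x, x <= n -> (p x = true <-> In (f x) L)) ->
  length (filter p (seq 0 (n+1))) = length L.
Proof.
  intros H1 H2 HL Hb Hp.
  rewrite <- (length_map g L). apply Permutation.Permutation_length.
  apply NoDup_Permutation.
  - apply NoDup_filter, seq_NoDup.
  - eapply NoDup_map_inj; eauto.
  - intro x. rewrite filter_In, in_seq, in_map_iff. split.
    + intros [Hx Hpx]. exists (f x). split; auto. apply Hp; auto; lia.
    + intros [c [<- Hc]]. specialize (Hb c Hc). split. lia. apply Hp. auto. rewrite H2; auto.
Qed.

Lemma count_ge (p : nat -> bool) n (f g : nat -> nat) L :
  (forall y, f (g y) = y) -> NoDup L ->
  (forall c, In c L -> g c <= n /\ p (g c) = true) ->
  length L <= length (filter p (seq 0 (n+1))).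
Proof.
  intros H2 HL Hb. rewrite <- (length_map g L). apply NoDup_incl_length.
  eapply NoDup_map_inj; eauto.
  intros x Hx. apply in_map_iff in Hx. destruct Hx as [c [<- Hc]]. destruct (Hb c Hc).
  apply filter_In. split; auto. apply in_seq; lia.
Qed.

Lemma count_le (p : nat -> bool) n (f g : nat -> nat) L :
  (forall x, g (f x) = x) ->
  (forall x, x <= n -> p x = true -> In (f x) L) ->
  length (filter p (seq 0 (n+1))) <= length L.
Proof.
  intros H1 Hp. rewrite <- (length_map f). apply NoDup_incl_length.
  eapply NoDup_map_inj; eauto. apply NoDup_filter, seq_NoDup.
  intros y Hy. apply in_map_iff in Hy. destruct Hy as [x [<- Hx]].
  apply filter_In in Hx. destruct Hx as [Hx1 Hx2]. apply in_seq in Hx1. apply Hp; auto; lia.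
Qed.

Definition comb (m : nat) := map (fun a => 2 * a) (seq 0 m).
Lemma comb_In m u : In u (comb m) <-> u mod 2 = 0 /\ u < 2 * m.
Proof. unfold comb. rewrite in_map_iff. split.
  - intros [a [<- Ha]]. apply in_seq in Ha. mlia.
  - intros [H1 H2]. exists (u/2). rewrite in_seq. mlia. Qed.
Lemma comb_NoDup m : NoDup (comb m).
Proof. unfold comb. apply FinFun.Injective_map_NoDup. intros x y; lia. apply seq_NoDup. Qed.
Lemma comb_length m : length (comb m) = m.
Proof. unfold comb. rewrite length_map, length_seq. auto. Qed.

Definition swap (a c x : nat) := if x =? a then c else if x =? c then a else x.
Lemma swap_inv a c x : swap a c (swap a c x) = x.
Proof. unfold swap. destruct (Nat.eqb_spec x a); destruct (Nat.eqb_spec x c);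
  repeat match goal with |- context [?x =? ?y] => destruct (Nat.eqb_spec x y) end; lia. Qed.

Lemma extend_bij W (h : nat -> nat) : (forall x y, x < W -> y < W -> h x = h y -> x = y) ->
  exists r ri : nat -> nat, (forall x, ri (r x) = x) /\ (forall y, r (ri y) = y) /\
    forall x, x < W -> r x = h x.
Proof.
  induction W; intro Hinj.
  - exists (fun x => x), (fun x => x). repeat split; intros; lia.
  - destruct IHW as (r & ri & H1 & H2 & H3). intros; apply Hinj; auto; lia.
    exists (fun x => swap (r W) (h W) (r x)), (fun y => ri (swap (r W) (h W) y)).
    repeat split.
    + intro x. rewrite swap_inv. auto.
    + intro y. rewrite H2, swap_inv. auto.
    + intros x Hx. unfold swap. destruct (Nat.eq_dec x W) as [->|Hne].
      rewrite Nat.eqb_refl. auto.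
      rewrite H3 by lia.
      destruct (Nat.eqb_spec (h x) (r W)) as [E|E].
      { exfalso. rewrite <- H3 in E by lia. apply Hne. rewrite <- (H1 x), E, H1. auto. }
      destruct (Nat.eqb_spec (h x) (h W)) as [E'|E'].
      { exfalso. apply Hne. apply Hinj; auto; lia. }
      auto.
Qed.

Lemma transfer (A : structure) i n (P : nat -> Prop) : iso A (Pfam i) ->
  (forall B, exists j h, P j /\ (forall u v, u <= B -> v <= B -> h u = h v -> u = v) /\
     (forall u v, u <= B -> v <= B -> Pfam j (h u) (h v) = Pfam i u v)) ->
  exists j A', P j /\ iso A' (Pfam j) /\ agree_upto n A A'.
Proof.
  intros (f & g & H1 & H2 & H3) HP.
  destruct (bound_upto f n) as [B HB].
  destruct (HP B) as (j & h & Pj & Hinj & Hpres).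
  destruct (extend_bij (S B) h) as (r & ri & R1 & R2 & R3). intros; apply Hinj; auto; lia.
  exists j, (fun x y => Pfam j (r (f x)) (r (f y))). split; auto. split.
  - exists (fun x => r (f x)), (fun y => g (ri y)). repeat split.
    + intro x. rewrite R1, H1; auto.
    + intro y. rewrite H2, R2; auto.
  - intros x y Hx Hy. pose proof (HB x Hx); pose proof (HB y Hy). rewrite H3, !R3 by lia.
    rewrite Hpres; auto.
Qed.

Lemma embedA : forall B, exists j (h : nat -> nat), j > 0 /\
  (forall u v, u <= B -> v <= B -> h u = h v -> u = v) /\
  (forall u v, u <= B -> v <= B -> Pfam j (h u) (h v) = Pfam 0 u v).
Proof.
  intro B. exists (B+1), (fun u => if u mod 4 =? 2 then u+4 else u). split. lia. split.
  - intros u v Hu Hv. destruct (Nat.eqb_spec (u mod 4) 2), (Nat.eqb_spec (v mod 4) 2); mlia.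
  - intros u v Hu Hv. apply eq_true_iff_eq. rewrite Pfam0_char, (Pfamk_char (B+1)) by lia.
    destruct (Nat.eqb_spec (u mod 4) 2), (Nat.eqb_spec (v mod 4) 2); mlia.
Qed.

Lemma embedB k : 0 < k -> forall B, exists j (h : nat -> nat), j = 0 /\
  (forall u v, u <= B -> v <= B -> h u = h v -> u = v) /\
  (forall u v, u <= B -> v <= B -> Pfam j (h u) (h v) = Pfam k u v).
Proof.
  intros Hk B. exists 0, (fun u => if (u mod 2 =? 0) && (u <=? 4*k+2) then (if u mod 4 =? 0 then u+4 else u) else 2*u+1).
  split. auto. split.
  - intros u v Hu Hv.
    destruct (Nat.eqb_spec (u mod 2) 0), (Nat.leb_spec u (4*k+2)), (Nat.eqb_spec (u mod 4) 0);
    destruct (Nat.eqb_spec (v mod 2) 0), (Nat.leb_spec v (4*k+2)), (Nat.eqb_spec (v mod 4) 0);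
    cbn [andb]; mlia.
  - intros u v Hu Hv. apply eq_true_iff_eq. rewrite Pfam0_char, (Pfamk_char k u v) by lia.
    destruct (Nat.eqb_spec (u mod 2) 0), (Nat.leb_spec u (4*k+2)), (Nat.eqb_spec (u mod 4) 0);
    destruct (Nat.eqb_spec (v mod 2) 0), (Nat.leb_spec v (4*k+2)), (Nat.eqb_spec (v mod 4) 0);
    cbn [andb]; mlia.
Qed.

Theorem not_nUs : ~ nUs_learnable Pfam.
Proof.
  intros [M [HL HM]].
  destruct (HM (Pfam 0) 0 (ex_intro _ 0 (iso_refl _)) (iso_refl _)) as [[n0 Hn0] _].
  destruct (transfer (Pfam 0) 0 n0 (fun j => j > 0) (iso_refl _) embedA) as (k & S1 & Hk & I1 & A1).
  destruct (HM S1 k (ex_intro _ k I1) I1) as [[n1' Hn1] _].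
  set (n1 := max n0 n1').
  destruct (transfer S1 k n1 (fun j => j = 0) I1 (embedB k Hk)) as (z & S2 & Hz & I2 & A2). subst z.
  destruct (HM S2 0 (ex_intro _ 0 I2) I2) as [_ Hlock].
  assert (E0' : M n0 S2 = Some 0).
  { rewrite <- (HL n0 S1 S2). rewrite <- (HL n0 _ _ A1). apply Hn0; lia.
    intros x y Hx Hy. apply A2; lia. }
  specialize (Hlock n0 E0' n1 ltac:(lia)).
  rewrite <- (HL n1 S1 S2 A2) in Hlock. rewrite Hn1 in Hlock by lia. injection Hlock. lia.
Qed.

Definition nonisol n (A : structure) x : bool :=
  pbool (exists y, y <= n /\ y <> x /\ (A x y = true \/ A y x = true)).
Definition V n (A : structure) : nat := length (filter (nonisol n A) (seq 0 (n+1))).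
Definition C n (A : structure) : bool :=
  pbool (exists b t, b <= n /\ t <= n /\ b <> t /\ A b t = true /\
     (forall y, y <= n -> A y t = true -> y = b \/ y = t) /\
     (forall y, y <= n -> A t y = true -> y = t) /\
     (forall x y, x <= n -> y <= n -> x <> y -> A x y = true -> A b x = true)).

Lemma V_agree m n A A' : n <= m -> agree_upto m A A' -> V n A = V n A'.
Proof.
  intros Hn Ha. unfold V. f_equal. apply filter_ext_in. intros x Hx. apply in_seq in Hx.
  unfold nonisol. apply pbool_ext. split; intros (y & H1 & H2 & H3); exists y;
    (split; [auto|split; [auto|]]); rewrite !Ha in * by lia; auto.
Qed.

Lemma C_agree m n A A' : n <= m -> agree_upto m A A' -> C n A = C n A'.
Proof.
  intros Hn Ha. unfold C. apply pbool_ext.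
  split; intros (b & t & Hb & Ht & Hbt & H1 & H2 & H3 & H4); exists b, t;
    repeat split; auto; try rewrite Ha in * by lia; auto.
  - intros y Hy E. apply H2; auto. rewrite Ha by lia; auto.
  - intros y Hy E. apply H3; auto. rewrite Ha by lia; auto.
  - intros x y Hx Hy Hxy E. rewrite <- Ha by lia. apply (H4 x y); auto. rewrite Ha by lia; auto.
  - intros y Hy E. apply H2; auto. rewrite <- Ha by lia; auto.
  - intros y Hy E. apply H3; auto. rewrite <- Ha by lia; auto.
  - intros x y Hx Hy Hxy E. rewrite Ha by lia. apply (H4 x y); auto. rewrite <- Ha by lia; auto.
Qed.

Lemma f_inj (f g : nat -> nat) x y : (forall x, g (f x) = x) -> f x = f y -> x = y.
Proof. intros H E. rewrite <- (H x), E, H. auto. Qed.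

Lemma V_Pk k A : 0 < k -> iso A (Pfam k) ->
  (forall n, V n A <= 2*k+2) /\ exists N, forall n, N <= n -> V n A = 2*k+2.
Proof.
  intros Hk (f & g & H1 & H2 & H3). split.
  - intro n. unfold V. rewrite <- (comb_length (2*k+2)). apply (count_le _ n f g); auto.
    intros x Hx Hp. unfold nonisol in Hp. rewrite pbool_true in Hp. destruct Hp as (y & Hy & Hyx & Hr).
    assert (f y <> f x) by (intro E; apply Hyx; exact (f_inj f g _ _ H1 E)).
    rewrite !H3, !(Pfamk_char k) in Hr by lia. apply comb_In. mlia.
  - destruct (bound_list g (comb (2*k+2))) as [N HN]. exists N. intros n Hn.
    unfold V. rewrite <- (comb_length (2*k+2)). apply (count_perm _ n f g); auto.
    apply comb_NoDup. intros c Hc. specialize (HN c Hc). lia.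
    intros x Hx. unfold nonisol. rewrite pbool_true. split.
    + intros (y & Hy & Hyx & Hr).
      assert (f y <> f x) by (intro E; apply Hyx; exact (f_inj f g _ _ H1 E)).
      rewrite !H3, !(Pfamk_char k) in Hr by lia. apply comb_In. mlia.
    + intro Hc. apply comb_In in Hc.
      destruct (Nat.eqb_spec (f x) 0) as [E|E].
      * exists (g 2). assert (In 2 (comb (2*k+2))) by (apply comb_In; mlia).
        specialize (HN _ H). split. lia. split.
        { intro E'. rewrite <- E' in E. rewrite H2 in E. discriminate. }
        left. rewrite H3, H2, E. apply Pfamk_char; auto. mlia.
      * exists (g 0). assert (In 0 (comb (2*k+2))) by (apply comb_In; mlia).
        specialize (HN _ H). split. lia. split.
        { intro E'. rewrite <- E' in E. rewrite H2 in E. auto. }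
        right. rewrite H3, H2. apply Pfamk_char; auto. mlia.
Qed.

Lemma V_P0 A : iso A (Pfam 0) -> forall M, exists N, forall n, N <= n -> M <= V n A.
Proof.
  intros (f & g & H1 & H2 & H3) M.
  destruct (bound_list g (comb (M+2))) as [N HN]. exists N. intros n Hn.
  unfold V. apply Nat.le_trans with (length (comb (M+2))). rewrite comb_length; lia.
  apply (count_ge _ n f g); auto. apply comb_NoDup.
  intros c Hc. split. specialize (HN c Hc); lia.
  unfold nonisol. rewrite pbool_true. pose proof Hc as Hc'. apply comb_In in Hc'.
  destruct (Nat.eqb_spec c 0) as [E|E].
  - exists (g 2). assert (In 2 (comb (M+2))) by (apply comb_In; mlia).
    specialize (HN _ H). split. lia. split.
    { intro E'. apply (f_equal f) in E'. rewrite !H2 in E'. lia. }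
    left. rewrite H3, !H2, E. apply Pfam0_char. mlia.
  - exists (g 0). assert (In 0 (comb (M+2))) by (apply comb_In; mlia).
    specialize (HN _ H). split. lia. split.
    { intro E'. apply (f_equal f) in E'. rewrite !H2 in E'. lia. }
    right. rewrite H3, !H2. apply Pfam0_char. mlia.
Qed.

Lemma C_Pk k A : 0 < k -> iso A (Pfam k) -> exists N, forall n, N <= n -> C n A = true.
Proof.
  intros Hk (f & g & H1 & H2 & H3). exists (max (g 0) (g 2)). intros n Hn.
  unfold C. rewrite pbool_true. exists (g 0), (g 2).
  split. lia. split. lia. split.
  { intro E. apply (f_equal f) in E. rewrite !H2 in E. discriminate. }
  split. { rewrite H3, !H2. apply Pfamk_char; auto. mlia. }
  split.
  { intros y Hy E. rewrite H3, H2, Pfamk_char in E by auto.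
    assert (f y = 0 \/ f y = 2) as [E'|E'] by mlia; [left|right]; rewrite <- (H1 y), E'; auto. }
  split.
  { intros y Hy E. rewrite H3, H2, Pfamk_char in E by auto.
    assert (f y = 2) as E' by mlia. rewrite <- (H1 y), E'; auto. }
  { intros x y Hx Hy Hxy E. rewrite H3, Pfamk_char in E by auto. rewrite H3, H2, Pfamk_char by auto.
    assert (f x <> f y) by (intro E'; apply Hxy; exact (f_inj f g _ _ H1 E')). mlia. }
Qed.

Lemma C_P0 A : iso A (Pfam 0) -> exists N, forall n, N <= n -> C n A = false.
Proof.
  intros (f & g & H1 & H2 & H3). exists (max (g 0) (max (g 2) (g 4))). intros n Hn.
  unfold C. apply not_true_iff_false. rewrite pbool_true.
  intros (b & t & Hb & Ht & Hbt & E1 & E2 & E3 & E4).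
  assert (Hb0 : f b = 0).
  { assert (A b (g 0) = true) as E.
    { apply (E4 (g 0) (g 4)); try lia.
      intro E. apply (f_equal f) in E. rewrite !H2 in E. discriminate.
      rewrite H3, !H2. apply Pfam0_char. mlia. }
    rewrite H3, H2, Pfam0_char in E. mlia. }
  assert (Htb : f t <> 0).
  { intro E. apply Hbt. apply (f_inj f g _ _ H1). lia. }
  rewrite H3, Hb0, Pfam0_char in E1.
  destruct (Nat.eq_dec (f t) 4) as [Ht4|Ht4].
  - assert (g 2 = t) as E.
    { apply E3. lia. rewrite H3, H2, Ht4. apply Pfam0_char. mlia. }
    apply (f_equal f) in E. rewrite H2 in E. lia.
  - destruct (E2 (g 4)) as [E|E]. lia.
    { rewrite H3, H2. apply Pfam0_char. mlia. }
    all: apply (f_equal f) in E; rewrite H2 in E; lia.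
Qed.

Definition G0 (A : structure) (n : nat) : nat := if C n A then 1 + V n A else 0.
Definition val0 i := if i =? 0 then 0 else 2*i+3.

Lemma G0_ev A i : iso A (Pfam i) -> exists N, forall n, N <= n -> G0 A n = val0 i.
Proof.
  intro Hi. unfold G0, val0. destruct (Nat.eqb_spec i 0) as [->|Hi0].
  - destruct (C_P0 A Hi) as [N HN]. exists N. intros n Hn. rewrite HN; auto.
  - destruct (C_Pk i A ltac:(lia) Hi) as [N HN]. destruct (V_Pk i A ltac:(lia) Hi) as [_ [N' HN']].
    exists (max N N'). intros n Hn. rewrite HN, HN' by lia. lia.
Qed.

Lemma learn_E0 : E_learnable E0 Pfam.
Proof.
  exists G0. split.
  - intros A _ n. exists n. intros A' _ Hag j Hj. unfold G0.
    rewrite (C_agree n j A A'), (V_agree n j A A') by auto. reflexivity.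
  - intros A A' [i Hi] [j Hj]. split.
    + intro HA. assert (Hi' : iso A' (Pfam i)) by (eapply iso_trans; [apply iso_sym; eauto | auto]).
      destruct (G0_ev A i Hi) as [N1 HN1]. destruct (G0_ev A' i Hi') as [N2 HN2].
      exists (max N1 N2). intros n Hn. rewrite HN1, HN2 by lia. auto.
    + intros [m Hm].
      destruct (G0_ev A i Hi) as [N1 HN1]. destruct (G0_ev A' j Hj) as [N2 HN2].
      set (n := max m (max N1 N2)).
      assert (E : val0 i = val0 j) by (rewrite <- (HN1 n), <- (HN2 n) by lia; apply Hm; lia).
      assert (i = j) as <-.
      { unfold val0 in E. destruct (Nat.eqb_spec i 0), (Nat.eqb_spec j 0); lia. }
      eapply iso_trans; [exact Hi | apply iso_sym; exact Hj].
Qed.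

Fixpoint U (A : structure) (n : nat) : nat :=
  match n with 0 => 0 | Datatypes.S p => Nat.min (V (Datatypes.S p) A) (U A p + 1) end.

Lemma U_agree m A A' : agree_upto m A A' -> forall j, j <= m -> U A j = U A' j.
Proof.
  intros Ha j. induction j; intro Hj; simpl; auto.
  rewrite IHj by lia. rewrite (V_agree m (Datatypes.S j) A A') by auto. auto.
Qed.

Lemma U_le_V A n : U A n <= V n A.
Proof. destruct n; simpl; lia. Qed.

Lemma U_ivt A m a : a <= U A m -> exists n, U A n = a.
Proof.
  induction m; intro H.
  - exists 0. simpl in *. lia.
  - destruct (Nat.le_gt_cases a (U A m)). auto.
    exists (Datatypes.S m). simpl in *. lia.
Qed.

Lemma U_reach A N L : (forall n, N <= n -> L <= V n A) -> forall j, Nat.min L j <= U A (N + j).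
Proof.
  intros HV j. induction j.
  - lia.
  - rewrite Nat.add_succ_r. simpl. specialize (HV (Datatypes.S (N + j)) ltac:(lia)). lia.
Qed.

Lemma U_range A i : iso A (Pfam i) -> forall a, (exists m, U A m = a) <-> (i = 0 \/ a <= 2*i+2).
Proof.
  intros Hi a. destruct (Nat.eq_dec i 0) as [->|Hi0].
  - split; auto. intros _.
    destruct (V_P0 A Hi a) as [N HN]. apply (U_ivt A (N + a)).
    pose proof (U_reach A N a HN a). lia.
  - destruct (V_Pk i A ltac:(lia) Hi) as [Hle [N HN]]. split.
    + intros [m <-]. right. pose proof (U_le_V A m). specialize (Hle m). lia.
    + intros [E|E]. lia. apply (U_ivt A (N + (2*i+2))).
      assert (HN' : forall n, N <= n -> 2*i+2 <= V n A) by (intros n Hn; rewrite HN; auto).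
      pose proof (U_reach A N _ HN' (2*i+2)). lia.
Qed.

Lemma learn_Erange : E_learnable Erange Pfam.
Proof.
  exists U. split.
  - intros A _ n. exists n. intros A' _ Hag j Hj. symmetry. apply (U_agree n); auto.
  - intros A A' [i Hi] [j Hj]. split.
    + intro HA. assert (Hi' : iso A' (Pfam i)) by (eapply iso_trans; [apply iso_sym; eauto | auto]).
      intro a. rewrite (U_range A i Hi), (U_range A' i Hi'). tauto.
    + intro H.
      assert (Hr : forall a, (i = 0 \/ a <= 2*i+2) <-> (j = 0 \/ a <= 2*j+2)).
      { intro a. rewrite <- (U_range A i Hi), <- (U_range A' j Hj). apply H. }
      assert (i = j) as <-.
      { pose proof (Hr (2*i+2)). pose proof (Hr (2*j+2)). pose proof (Hr (2*i+2*j+3)). lia. }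
      eapply iso_trans; [exact Hi | apply iso_sym; exact Hj].
Qed.

Theorem mainTheorem13 :
  E_learnable E0 Pfam /\ E_learnable Erange Pfam /\ ~ nUs_learnable Pfam.
Proof. split; [exact learn_E0 | split; [exact learn_Erange | exact not_nUs]]. Qed.
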